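(* Let $n\ge 5$ be odd. Then $E_n=\{x+2^{n-2}: x\in E_{n-1}\}\cup\{x+2^{n-1}: x\in E_{n-1}\}$; that is, listing $E_n$ in increasing order, one obtains the elements of $E_{n-1}$ each increased by $2^{n-2}$ (in increasing order), immediately followed by the elements of $E_{n-1}$ each increased by $2^{n-1}$ (in increasing order).
   Context: Let $D$ (OEIS A036991) be the set of nonnegative integers $m$ such that, reading the binary expansion of $m$ from the least significant bit to the most significant bit, at every point the number of 1's read so far is at least the number of 0's read so far. For $n\ge1$ let $M_n=2^n-1$ and let the $n$-level be $E_n=D\cap(M_{n-1},M_n]$, i.e. the elements of $D$ whose binary expansion has exactly $n$ digits. *)

(* Defs.v *)
From mathcomp Require Import all_boot.
Set Implicit Arguments. Unset Strict Implicit. Unset Printing Implicit Defensive.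

Fixpoint bits_fuel (k m : nat) : seq bool :=
  match k with
  | 0 => [::]
  | k'.+1 => if m == 0 then [::] else odd m :: bits_fuel k' m./2
  end.
Definition bits (m : nat) : seq bool := bits_fuel m m.

(* m is in D (OEIS A036991): reading bits from LSB to MSB, every prefix has
   at least as many 1's as 0's. *)
Definition inD (m : nat) : bool :=
  let s := bits m in
  all (fun i => count_mem false (take i s) <= count_mem true (take i s))
      (iota 0 (size s).+1).

Definition Mn (n : nat) : nat := 2 ^ n - 1.

Definition inEn (n m : nat) : bool := inD m && (Mn n.-1 < m <= Mn n).

Definition Elist (n : nat) : seq nat := [seq m <- iota 0 (2 ^ n) | inEn n m].

(* Main.v *)
Require Import Defs.
From mathcomp Require Import all_boot zify.

Fixpoint num (s : seq bool) : nat := if s is b :: s' then b + 2 * num s' else 0.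

Lemma num_cat s t : num (s ++ t) = num s + 2 ^ size s * num t.
Proof. elim: s => [|b s IH] /=; first by rewrite add0n mul1n. rewrite IH expnS; lia. Qed.

Lemma num_rcons z b : num (rcons z b) = num z + 2 ^ size z * b.
Proof. rewrite -cats1 num_cat /=; case: b => /=; lia. Qed.

Lemma num_lt z : num z < 2 ^ size z.
Proof. elim: z => [|b z IH] //=. rewrite expnS; case: b => /=; lia. Qed.

Lemma bits_fuel_eq k k' m : m <= k -> m <= k' -> bits_fuel k m = bits_fuel k' m.
Proof.
elim: k k' m => [|k IH] [|k'] m H1 H2 /=.
- by [].
- by have -> : m = 0 by lia.
- by have -> : m = 0 by lia.
case: eqP => // Hm; congr (_ :: _); apply: IH.
- have := odd_double_half m; rewrite -muln2; lia. - have := odd_double_half m; rewrite -muln2; lia.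
Qed.

Lemma half_lt m : 0 < m -> m./2 < m.
Proof. move=> H; have := odd_double_half m; rewrite -muln2; lia. Qed.

Lemma bitsE m : bits m = if m == 0 then [::] else odd m :: bits m./2.
Proof.
rewrite /bits; case: m => [|m] //=. congr (_ :: _); apply: bits_fuel_eq => //.
have := @half_lt m.+1 (ltn0Sn m); lia.
Qed.

Lemma num_bits m : num (bits m) = m.
Proof.
elim: m {-2}m (leqnn m) => [|k IH] m Hm.
  by have -> : m = 0 by lia.
rewrite bitsE; case: eqP => // Hm0 /=; rewrite IH.
  by have := odd_double_half m; rewrite -muln2; lia.
have := @half_lt m; lia.
Qed.

Lemma bits_rcons m : 0 < m -> exists z, bits m = rcons z true.
Proof.
elim: m {-2}m (leqnn m) => [|k IH] m Hm Hp; first lia.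
rewrite bitsE; case: eqP => [|_]; first lia.
case: (posnP m./2) => H.
  have Hm1: m = 1 by have := odd_double_half m; rewrite H; lia.
  by rewrite Hm1; exists [::].
have [|z ->] := IH m./2 _ H; first by have := @half_lt m Hp; lia.
by exists (odd m :: z).
Qed.

Lemma bits_num z : bits (num (rcons z true)) = rcons z true.
Proof.
elim: z => [|b z IH] //=.
have Hp : 0 < num (rcons z true) by rewrite num_rcons; have := expn_gt0 2 (size z); lia.
rewrite bitsE; case: eqP => [|_]; first lia.
have -> : odd (b + 2 * num (rcons z true)) = b by rewrite oddD oddM /=; case: b.
have -> : (b + 2 * num (rcons z true))./2 = num (rcons z true).
  by rewrite mul2n half_bit_double.
by rewrite IH.
Qed.

Definition Dcond (s : seq bool) : bool :=
  all (fun i => count_mem false (take i s) <= count_mem true (take i s))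
      (iota 0 (size s).+1).

Lemma inD_Dcond m : inD m = Dcond (bits m).
Proof. by []. Qed.

Lemma Dcond_rcons (s : seq bool) (b : bool) : Dcond (rcons s b) =
  Dcond s && (count_mem false (rcons s b) <= count_mem true (rcons s b)).
Proof.
rewrite /Dcond size_rcons -(addn1 (size s).+1) iotaD all_cat add0n.
have -> : iota (size s).+1 1 = [:: (size s).+1] by [].
rewrite all_seq1 take_oversize ?size_rcons //.
congr (_ && _); apply: eq_in_all => i; rewrite mem_iota add0n => /andP [_ Hi].
by rewrite -cats1 takel_cat //; lia.
Qed.

Lemma Dcond_count (s : seq bool) : Dcond s -> count_mem false s <= count_mem true s.
Proof.
move=> /allP H; have := H (size s); rewrite mem_iota take_oversize // leq0n add0n ltnSn; apply; done.
Qed.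

Lemma count_tf (s : seq bool) : count_mem true s + count_mem false s = size s.
Proof. by elim: s => [|[] s IH] //=; rewrite ?add1n ?add0n -IH ?addSn ?addnS. Qed.

Lemma Mn_range k m : (Mn k.-1 < m <= Mn k) = (2 ^ k.-1 <= m < 2 ^ k).
Proof.
rewrite /Mn; have := expn_gt0 2 k.-1; have := expn_gt0 2 k.
move=> A B; apply/idP/idP => /andP [H1 H2]; apply/andP; split; lia.
Qed.

Lemma inEn_char k m : inEn k.+1 m <->
  exists z, size z = k /\ m = num (rcons z true) /\ Dcond (rcons z true).
Proof.
rewrite /inEn Mn_range /=; split.
- move=> /andP [HD /andP [H1 H2]].
  have Hp : 0 < m by have := expn_gt0 2 k; lia.
  have [z Hz] := bits_rcons m Hp.
  have Em : m = num (rcons z true) by rewrite -Hz num_bits.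
  have Hl := num_lt z.
  have Er : num (rcons z true) = num z + 2 ^ size z by rewrite num_rcons muln1.
  exists z; split; last by split; [exact: Em | rewrite -Hz -inD_Dcond].
  case: (ltngtP (size z) k) => // Hs.
  + have : 2 ^ (size z).+1 <= 2 ^ k by rewrite leq_exp2l.
    rewrite expnS; lia.
  + have : 2 ^ k.+1 <= 2 ^ size z by rewrite leq_exp2l.
    lia.
- move=> [z [Hs [-> HD]]].
  rewrite inD_Dcond bits_num HD /= num_rcons muln1 Hs.
  have := num_lt z; rewrite Hs expnS; lia.
Qed.

Lemma countT_rcons s b : count_mem true (rcons s b) = count_mem true s + b.
Proof. by rewrite -cats1 count_cat; case: b. Qed.
Lemma countF_rcons s b : count_mem false (rcons s b) = count_mem false s + ~~ b.
Proof. by rewrite -cats1 count_cat; case: b. Qed.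

Definition ct (s : seq bool) := count_mem true s.
Definition cf (s : seq bool) := count_mem false s.
Lemma ctE (s : seq bool) : count_mem true s = ct s. Proof. by []. Qed.
Lemma cfE (s : seq bool) : count_mem false s = cf s. Proof. by []. Qed.
Ltac nlia := rewrite ?ctE ?cfE; lia.

Lemma has_add l c m : has (fun x => m == x + c) l = (c <= m) && ((m - c) \in l).
Proof.
apply/hasP/andP => [[x Hx /eqP ->]|[H1 H2]].
  by rewrite addnK leq_addl.
by exists (m - c) => //; rewrite subnK.
Qed.

Lemma mem_map_has l c m : (m \in [seq x + c | x <- l]) = has (fun x => m == x + c) l.
Proof. by apply/mapP/hasP => [[y Hy ->]|[y Hy /eqP ->]]; exists y. Qed.

Lemma inEn_bound k x : inEn k x -> 2 ^ k.-1 <= x < 2 ^ k.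
Proof. by rewrite /inEn Mn_range => /andP []. Qed.

Lemma mem_Elist k x : (x \in Elist k) = inEn k x.
Proof.
rewrite mem_filter mem_iota add0n /=; case H: (inEn k x) => //=.
by have /andP [_ ->] := inEn_bound k x H.
Qed.

Lemma part1 N m : odd N ->
  inEn N.+2 m = (2^N <= m) && inEn N.+1 (m - 2^N) || (2^N.+1 <= m) && inEn N.+1 (m - 2^N.+1).
Proof.
move=> oN; have E2 : 2 ^ N.+1 = 2 * 2 ^ N := expnS 2 N; apply/idP/idP.
- move/inEn_char => [z [Hs [Em HD]]].
  case/lastP: z Hs Em HD => [|y b] //; rewrite size_rcons => -[Hs].
  rewrite !num_rcons size_rcons Hs !Dcond_rcons => Em /andP [/andP [Hy _] _].
  have Hx : inEn N.+1 (num y + 2 ^ N).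
    apply/inEn_char; exists y; split => //; split; first by rewrite num_rcons muln1 Hs.
    rewrite Dcond_rcons Hy countT_rcons countF_rcons /=; have := Dcond_count _ Hy; nlia.
  case: b Em => /= Em; apply/orP; [right|left]; apply/andP; split.
  + lia.
  + by have -> : m - 2 ^ N.+1 = num y + 2 ^ N by lia.
  + lia.
  + by have -> : m - 2 ^ N = num y + 2 ^ N by rewrite expnS in Em *; lia.
- case/orP => /andP [Hle /inEn_char [y [Hs [Em HD]]]]; move: HD;
    rewrite Dcond_rcons => /andP [Hy _]; have Hc := Dcond_count _ Hy;
    rewrite num_rcons Hs muln1 in Em.
  + apply/inEn_char; exists (rcons y false); split; first by rewrite size_rcons Hs.
    split; first by rewrite !num_rcons size_rcons Hs /= expnS in Em *; lia.
    rewrite !Dcond_rcons Hy !countT_rcons !countF_rcons /=.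
    have Hne : count_mem false y != count_mem true y.
      apply/eqP => E; move: oN; rewrite -Hs -count_tf E addnn odd_double //.
    move: Hc Hne; nlia.
  + apply/inEn_char; exists (rcons y true); split; first by rewrite size_rcons Hs.
    split; first by rewrite !num_rcons size_rcons Hs /=; lia.
    rewrite !Dcond_rcons Hy !countT_rcons !countF_rcons /=; move: Hc; nlia.
Qed.

Theorem proposition7 (n : nat) :
  5 <= n -> odd n ->
  (forall m, inEn n m =
     has (fun x => m == x + 2 ^ (n - 2)) (Elist n.-1)
     || has (fun x => m == x + 2 ^ (n - 1)) (Elist n.-1))
  /\
  Elist n = [seq x + 2 ^ (n - 2) | x <- Elist n.-1]
            ++ [seq x + 2 ^ (n - 1) | x <- Elist n.-1].
Proof.
case: n => [|[|N]] // H5 oN.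
have -> : N.+2 - 2 = N by lia.
have -> : N.+2 - 1 = N.+1 by lia.
have oN' : odd N by move: oN => /=; rewrite negbK.
have P1 : forall m, inEn N.+2 m =
     has (fun x => m == x + 2 ^ N) (Elist N.+1)
     || has (fun x => m == x + 2 ^ N.+1) (Elist N.+1).
  by move=> m; rewrite part1 // !has_add !mem_Elist.
split => //.
apply: (irr_sorted_eq ltn_trans ltnn).
- apply: sorted_filter; [exact: ltn_trans | exact: iota_ltn_sorted].
- have SL : sorted ltn (Elist N.+1) by apply: sorted_filter; [exact: ltn_trans | exact: iota_ltn_sorted].
  rewrite sorted_pairwise; last exact: ltn_trans.
  rewrite pairwise_cat -!sorted_pairwise; try exact: ltn_trans.
  rewrite !(homo_sorted (e := ltn) (e' := ltn)) // ?andbT; try by move=> x y /=; rewrite ltn_add2r.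
  apply/allrelP => x y /mapP [a Ha ->] /mapP [b Hb ->].
  move: Ha Hb; rewrite !mem_Elist => /inEn_bound /= Ha /inEn_bound /= Hb.
  rewrite expnS in Ha Hb *; lia.
- by move=> m; rewrite mem_cat !mem_map_has mem_Elist P1.
Qed.
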